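(* Let $\rho>1$. Then: (i) $0<\kappa^c_\rho(1)<1$; more precisely, if $1<\rho\le2$ then $\kappa^c_\rho(1)=\frac{2\sqrt\rho}{1+\rho}$, while if $\rho\ge2$ then $\kappa^c_\rho(1)=\frac{\sqrt{4+\rho^2}}{1+\rho}$. (ii) $0<\kappa^c_\rho<1$. (iii) There exists $\rho_0>2$ such that if $\rho\le\rho_0$ then $\kappa^c_\rho=\kappa^c_\rho(1)$. Consequently, if $1<\rho\le2$ then $\kappa^c_\rho=\frac{2\sqrt\rho}{1+\rho}$, while if $2\le\rho\le\rho_0$ then $\kappa^c_\rho=\frac{\sqrt{4+\rho^2}}{1+\rho}$.
   Context: Fix $\rho>1$ and an integer $k\ge1$. Set $r_1=r_{k+1}=1+\rho$ and $r_i=2$ for $2\le i\le k$. For $(a_i)_{2\le i\le k+1}\in[0,1)^k$ define $d_1=1+\rho$ and, for $2\le i\le k+1$, $d_i>0$ by $d_i^2=d_{i-1}^2+2r_ia_id_{i-1}+r_i^2$; write $\mathcal D(a_2,\dots,a_{k+1})=d_{k+1}$. Set $$\kappa^c_\rho(k)=\inf_{0\le a_2,\dots,a_{k+1}<1}\max\left(\left(\frac{4\rho}{(1+\rho)^2\sqrt{\prod_{2\le i\le k+1}(1-a_i^2)}}\right)^{\frac1{k+1}},\ \frac{2\rho}{\mathcal D(a_2,\dots,a_{k+1})}\right),$$ and $\kappa^c_\rho=\inf_{k\ge1}\kappa^c_\rho(k)$. *)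

(* Defs.v *)
From HB Require Import structures.
From mathcomp Require Import all_boot all_order all_algebra.
From mathcomp Require Import all_classical all_reals.
From mathcomp Require Import exp.
Set Implicit Arguments. Unset Strict Implicit. Unset Printing Implicit Defensive.
Import Order.TTheory GRing.Theory Num.Theory.
Local Open Scope ring_scope.
Local Open Scope classical_set_scope.

Section Kappa.
Variable R : realType.

Definition rad (rho : R) (k i : nat) : R :=
  if (i == 1)%N || (i == k.+1)%N then 1 + rho else 2.

(* dseq rho k a j = d_{j+1}:  d_1 = 1+rho,
   d_i = sqrt(d_{i-1}^2 + 2 r_i a_i d_{i-1} + r_i^2) (positive root) *)
Fixpoint dseq (rho : R) (k : nat) (a : nat -> R) (j : nat) : R :=
  match j with
  | 0 => 1 + rho
  | j'.+1 =>
      let i := j'.+2 in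
      let d := dseq rho k a j' in
      Num.sqrt (d ^+ 2 + 2 * rad rho k i * a i * d + rad rho k i ^+ 2)
  end.

Definition Dfun (rho : R) (k : nat) (a : nat -> R) : R := dseq rho k a k.

Definition admissible (k : nat) (a : nat -> R) : Prop :=
  forall i : nat, (2 <= i <= k.+1)%N -> 0 <= a i /\ a i < 1.

Definition kobj (rho : R) (k : nat) (a : nat -> R) : R :=
  Num.max
    (powR (4 * rho / ((1 + rho) ^+ 2 *
             Num.sqrt (\prod_(2 <= i < k.+2) (1 - a i ^+ 2))))
          (k.+1%:R)^-1)
    (2 * rho / Dfun rho k a).

Definition kappa_k (rho : R) (k : nat) : R :=
  inf [set v | exists a : nat -> R, admissible k a /\ v = kobj rho k a].

Definition kappa (rho : R) : R :=
  inf [set v | exists k : nat, (1 <= k)%N /\ v = kappa_k rho k].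

End Kappa.

(* Main.v *)
Require Import Defs.
From HB Require Import structures.
From mathcomp Require Import all_boot all_order all_algebra.
From mathcomp Require Import all_classical all_reals.
From mathcomp Require Import exp.
From mathcomp Require Import ring lra.
Set Implicit Arguments.
Import Order.TTheory GRing.Theory Num.Theory.
Local Open Scope ring_scope.

Section S.
Variable R : realType.
Implicit Types (rho : R).

Lemma prod_bounds k (a : nat -> R) : admissible k a ->
  0 < \prod_(2 <= i < k.+2) (1 - a i ^+ 2) /\ \prod_(2 <= i < k.+2) (1 - a i ^+ 2) <= 1.
Proof.
move=> ha; rewrite big_nat_cond; split.
  apply: prodr_gt0 => i /andP[/andP[h1 h2] _].
  have [h3 h4] := ha i ltac:(by rewrite h1 -ltnS h2).
  nra.
apply: prodr_ile1 => i /andP[/andP[h1 h2] _].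
have [h3 h4] := ha i ltac:(by rewrite h1 -ltnS h2).
apply/andP; split; nra.
Qed.

Definition cc rho : R := 4 * rho / (1 + rho) ^+ 2.

Lemma cc_bounds rho : 1 < rho -> 0 < cc rho /\ cc rho <= 1.
Proof.
move=> h; rewrite /cc; have hp : 0 < (1 + rho) ^+ 2 by nra.
split; first by apply: divr_gt0; lra.
rewrite ler_pdivrMr //; nra.
Qed.

Lemma T1_lb rho k a : 1 < rho -> admissible k a ->
  powR (cc rho) (k.+1%:R)^-1 <= kobj rho k a.
Proof.
move=> hr ha; rewrite /kobj le_max; apply/orP; left.
have [hP1 hP2] := prod_bounds ha.
set P := \prod_(_ <= _ < _) _ in hP1 hP2 *.
have hs0 : 0 < Num.sqrt P by rewrite sqrtr_gt0.
have hs1 : Num.sqrt P <= 1 by rewrite -sqrtr1 ler_sqrt.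
have [hc0 hc1] := cc_bounds rho hr.
apply: ge0_ler_powR => //.
- by rewrite invr_ge0 ler0n.
- by rewrite nnegrE ltW.
- rewrite nnegrE; apply: divr_ge0; first lra.
  apply: mulr_ge0; [nra| exact: ltW].
have hp : 0 < (1 + rho) ^+ 2 by nra.
have hcc : cc rho * (1 + rho) ^+ 2 = 4 * rho by rewrite /cc divfK // gt_eqF.
rewrite ler_pdivlMr; last exact: mulr_gt0.
nra.
Qed.

Lemma sq_le (u v : R) : 0 <= v -> u ^+ 2 <= v ^+ 2 -> u <= v.
Proof. move=> hv h; nra. Qed.

Lemma sqrt_eq (x y : R) : 0 <= y -> y ^+ 2 = x -> Num.sqrt x = y.
Proof. by move=> hy <-; rewrite sqrtr_sqr ger0_norm. Qed.

Lemma le_sqrt_of (v x : R) : 0 <= x -> v ^+ 2 <= x -> v <= Num.sqrt x.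
Proof. move=> hx h; apply: sq_le; first exact: sqrtr_ge0. by rewrite sqr_sqrtr. Qed.

Lemma sqrt_le_of (v x : R) : 0 <= v -> x <= v ^+ 2 -> Num.sqrt x <= v.
Proof.
move=> hv h; apply: sq_le => //.
case: (leP 0 x) => hx; first by rewrite sqr_sqrtr.
have : Num.sqrt x = 0 by apply/eqP; rewrite sqrtr_eq0 ltW.
move=> ->; rewrite expr0n /=; nra.
Qed.

Lemma div_le (q w p d : R) : 0 < w -> 0 < d -> q * d <= p * w -> q / w <= p / d.
Proof. by move=> hw hd h; rewrite ler_pdivrMr // mulrAC ler_pdivlMr. Qed.

Lemma inf_eq (E : set R) v : E v -> lbound E v -> inf E = v.
Proof.
move=> hE hl; apply/le_anti/andP; split.
  by apply: (ge_inf (ex_intro _ v hl)).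
by apply: lb_le_inf => //; exists v.
Qed.

Definition V1 rho : R := 2 * Num.sqrt rho / (1 + rho).
Definition V2 rho : R := Num.sqrt (4 + rho ^+ 2) / (1 + rho).

Lemma sqrt_cc rho : 1 < rho -> Num.sqrt (cc rho) = V1 rho.
Proof.
move=> h; apply: sqrt_eq.
  rewrite /V1; apply: divr_ge0; last lra.
  apply: mulr_ge0; [lra | exact: sqrtr_ge0].
rewrite /V1 expr_div_n exprMn sqr_sqrtr; last lra.
by rewrite /cc; congr (_ / _); ring.
Qed.

Lemma lb_sqrt rho k a : 1 < rho -> (1 <= k)%N -> admissible k a ->
  V1 rho <= kobj rho k a.
Proof.
move=> hr hk ha; have [hc0 hc1] := cc_bounds rho hr.
rewrite -sqrt_cc // -powR12_sqrt; last exact: ltW.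
apply: (@le_trans _ _ (powR (cc rho) (k.+1%:R)^-1)); last exact: T1_lb.
apply: ger_powR; first by rewrite hc0 hc1.
by rewrite lef_pV2 ?posrE ?ltr0n // ler_nat ltnS.
Qed.

Lemma poly (t : R) : 0 <= t -> 2 * t <= 1 ->
  0 <= 64 + 192*t + 16*t^+2 - 96*t^+3 - 56*t^+4 - 12*t^+5 - t^+6.
Proof. move=> h1 h2.
have h3 : t^+2 <= t by nra.
have h4 : t^+3 <= t by nra.
have h5 : t^+4 <= t by nra.
have h6 : t^+5 <= t by nra.
have h7 : t^+6 <= t by nra.
nra. Qed.

Lemma poly2 rho : 2 <= rho -> 2 * rho <= 5 ->
  (4 + rho^+2)^+3 <= 16 * rho^+2 * (1+rho)^+2.
Proof. move=> h1 h2.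
have := @poly (rho - 2) ltac:(lra) ltac:(lra).
move=> h. rewrite -subr_ge0. have -> : 16 * rho ^+ 2 * (1 + rho) ^+ 2 - (4 + rho ^+ 2) ^+ 3 = 64 + 192 * (rho - 2) + 16 * (rho - 2) ^+ 2 - 96 * (rho - 2) ^+ 3 - 56 * (rho - 2) ^+ 4 -
    12 * (rho - 2) ^+ 5 - (rho - 2) ^+ 6 by ring.
exact h. Qed.

Lemma V2_ge0 rho : 1 < rho -> 0 <= V2 rho.
Proof. move=> h; rewrite /V2; apply: divr_ge0; [exact: sqrtr_ge0 | lra]. Qed.

Lemma V2_sq rho : 1 < rho -> Num.sqrt (4 + rho ^+ 2) ^+ 2 = 4 + rho ^+ 2.
Proof. move=> h; rewrite sqr_sqrtr //; nra. Qed.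

Lemma lb_k2 rho k a : 2 <= rho -> 2 * rho <= 5 -> (2 <= k)%N -> admissible k a ->
  V2 rho <= kobj rho k a.
Proof.
move=> hr1 hr2 hk ha; have hr : 1 < rho by lra.
have [hc0 hc1] := cc_bounds rho hr.
apply: (@le_trans _ _ (powR (cc rho) (k.+1%:R)^-1)); last exact: T1_lb.
apply: (@le_trans _ _ (powR (cc rho) 3^-1)); last first.
  apply: ger_powR; first by rewrite hc0 hc1.
  by rewrite lef_pV2 ?posrE ?ltr0n // ler_nat ltnS.
have hV := V2_ge0 rho hr.
have -> : V2 rho = powR (V2 rho ^+ 3) 3^-1.
  by rewrite -powR_mulrn // -powRrM mulfV ?powRr1 // pnatr_eq0.
apply: ge0_ler_powR.
- by rewrite invr_ge0 ler0n.
- by rewrite nnegrE exprn_ge0.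
- by rewrite nnegrE ltW.
have hW : 0 < 1 + rho by lra.
rewrite /V2 expr_div_n /cc ler_pdivrMr ?exprn_gt0 //.
have -> : 4 * rho / (1 + rho) ^+ 2 * (1 + rho) ^+ 3 = 4 * rho * (1 + rho).
  by field; rewrite gt_eqF.
apply: sq_le; first nra.
have -> : (Num.sqrt (4 + rho ^+ 2) ^+ 3) ^+ 2 = (Num.sqrt (4 + rho ^+ 2) ^+ 2) ^+ 3.
  by rewrite -!exprM.
rewrite V2_sq //.
have -> : (4 * rho * (1 + rho)) ^+ 2 = 16 * rho^+2 * (1+rho)^+2 by ring.
exact: poly2.
Qed.


Definition T1f rho (y : R) := Num.sqrt (4 * rho / ((1 + rho) ^+ 2 * Num.sqrt (1 - y ^+ 2))).
Definition T2f rho (y : R) := 2 * rho / Num.sqrt (2 * (1 + rho) ^+ 2 * (1 + y)).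

Lemma kobj1 rho a : 1 < rho -> 0 <= a 2%N < 1 ->
  kobj rho 1 a = Num.max (T1f rho (a 2%N)) (T2f rho (a 2%N)).
Proof.
move=> hr /andP[h0 h1].
rewrite /kobj /Dfun /= big_nat1 /rad /= powR12_sqrt; last first.
  apply: divr_ge0; first lra.
  apply: mulr_ge0; [nra | exact: sqrtr_ge0].
have -> : Defs.rad rho 1 2 = 1 + rho by [].
congr (Num.max _ (_ / Num.sqrt _)); ring.
Qed.

Lemma lb1 rho y : 2 <= rho -> 0 <= y < 1 ->
  V2 rho <= Num.max (T1f rho y) (T2f rho y).
Proof.
move=> hr /andP[h0 h1]; have hW : 0 < 1 + rho by lra.
have hQ := V2_sq rho ltac:(lra).
have hQ0 : 0 <= Num.sqrt (4 + rho ^+ 2) := sqrtr_ge0 _.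
rewrite le_max; case: (leP ((4 + rho ^+ 2) * (1 + y)) (2 * rho ^+ 2)) => hy.
- apply/orP; right; rewrite /V2 /T2f.
  have hD : 0 < 2 * (1 + rho) ^+ 2 * (1 + y) by apply: mulr_gt0; [nra|lra].
  apply: div_le => //; first by rewrite sqrtr_gt0.
  apply: sq_le; first nra.
  rewrite exprMn hQ sqr_sqrtr; last exact: ltW.
  have hW2 : 0 <= (1 + rho) ^+ 2 by nra.
  nra.
- apply/orP; left; rewrite /V2 /T1f.
  have hS : 0 < 1 - y ^+ 2 by nra.
  have hS1 : 0 < Num.sqrt (1 - y ^+ 2) by rewrite sqrtr_gt0.
  have hW2 : 0 < (1 + rho) ^+ 2 by nra.
  apply: le_sqrt_of.
    apply: divr_ge0; first lra.
    by apply: mulr_ge0; apply: ltW.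
  rewrite expr_div_n hQ; apply: div_le => //; first exact: mulr_gt0.
  suff : (4 + rho ^+ 2) * Num.sqrt (1 - y ^+ 2) <= 4 * rho by nra.
  apply: sq_le; first lra.
  rewrite exprMn sqr_sqrtr; last exact: ltW.
  set z := (4 + rho ^+ 2) * (1 + y) - 2 * rho ^+ 2.
  have hz : 0 <= z by rewrite /z; lra.
  have e : (4 + rho ^+ 2) ^+ 2 * (1 - y ^+ 2) = (8 - z) * (2 * rho ^+ 2 + z).
    by rewrite /z; ring.
  rewrite e.
  have : z * (8 - 2 * rho ^+ 2 - z) <= 0.
    apply: mulr_ge0_le0 => //; nra.
  nra.
Qed.


Definition a0 : nat -> R := fun _ => 0.

Lemma adm0 k : admissible k a0.
Proof. by move=> i _; rewrite /a0; split; [exact: lexx | exact: ltr01]. Qed.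

Lemma V1_pos rho : 1 < rho -> 0 < V1 rho.
Proof.
move=> h; rewrite /V1; apply: divr_gt0; last lra.
apply: mulr_gt0; first lra. rewrite sqrtr_gt0; lra.
Qed.

Lemma V1_lt1 rho : 1 < rho -> V1 rho < 1.
Proof.
move=> h; rewrite /V1 ltr_pdivrMr; last lra.
have hs := sqr_sqrtr (ltW (lt_trans ltr01 h)).
have hs0 := sqrtr_ge0 rho.
have hs1 : 1 < Num.sqrt rho by nra.
nra.
Qed.

Lemma V2_pos rho : 1 < rho -> 0 < V2 rho.
Proof.
move=> h; rewrite /V2; apply: divr_gt0; last lra.
rewrite sqrtr_gt0; nra.
Qed.

Lemma V2_lt1 rho : 2 <= rho -> V2 rho < 1.
Proof.
move=> h; rewrite /V2 ltr_pdivrMr; last lra.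
have hQ := V2_sq rho ltac:(lra).
have hQ0 := sqrtr_ge0 (4 + rho ^+ 2).
rewrite mul1r; nra.
Qed.

Lemma kk1_le2 rho : 1 < rho -> rho <= 2 -> kappa_k rho 1 = V1 rho.
Proof.
move=> h1 h2; apply: inf_eq.
  exists a0; split; first exact: adm0.
  have h00 : 0 <= a0 2%N < 1 by rewrite /a0 lexx ltr01.
  rewrite kobj1 // /a0.
  have eT1 : T1f rho 0 = V1 rho.
    by rewrite /T1f expr0n /= subr0 sqrtr1 mulr1 -sqrt_cc.
  rewrite max_l eT1 //.
  rewrite /T2f /V1 addr0 mulr1.
  have hW : 0 < 1 + rho by lra.
  have hD : 0 < 2 * (1 + rho) ^+ 2 by nra.
  apply: div_le => //; first by rewrite sqrtr_gt0.
  apply: sq_le.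
    apply: mulr_ge0; last exact: sqrtr_ge0.
    apply: mulr_ge0; [lra| exact: sqrtr_ge0].
  rewrite !exprMn !sqr_sqrtr; [|exact: ltW|lra].
  have hW2 : 0 <= (1 + rho) ^+ 2 by nra.
  have : 0 <= (2 - rho) * (rho * (1 + rho) ^+ 2) by apply: mulr_ge0; nra.
  nra.
move=> v [a [ha ->]]; exact: lb_sqrt.
Qed.

Definition astar rho : R := (rho ^+ 2 - 4) / (rho ^+ 2 + 4).

Lemma kk1_ge2 rho : 2 <= rho -> kappa_k rho 1 = V2 rho.
Proof.
move=> h; have hr : 1 < rho by lra.
have hm : 0 < rho ^+ 2 + 4 by nra.
have e : astar rho * (rho ^+ 2 + 4) = rho ^+ 2 - 4.
  by rewrite /astar divfK // gt_eqF.
have ha0 : 0 <= astar rho by rewrite /astar divr_ge0 //; nra.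
have ha1 : astar rho < 1 by rewrite /astar ltr_pdivrMr //; lra.
have hW : 0 < 1 + rho by lra.
have hQ := V2_sq rho hr.
have hQ0 := sqrtr_ge0 (4 + rho ^+ 2).
apply: inf_eq.
  exists (fun _ => astar rho); split.
    by move=> i _; split.
  have hh : 0 <= astar rho < 1 by rewrite ha0 ha1.
  rewrite kobj1 //; apply/le_anti/andP; split; first by have := @lb1 rho (astar rho) h hh.
  rewrite ge_max; apply/andP; split.
  - rewrite /T1f; apply: sqrt_le_of; first exact: V2_ge0.
    have hS : 0 < 1 - astar rho ^+ 2 by nra.
    have hS1 : 0 < Num.sqrt (1 - astar rho ^+ 2) by rewrite sqrtr_gt0.
    have hW2 : 0 < (1 + rho) ^+ 2 by nra.
    rewrite /V2 [(_ / (1 + rho)) ^+ 2]expr_div_n hQ; apply: div_le => //; first exact: mulr_gt0.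
    suff : 4 * rho <= (4 + rho ^+ 2) * Num.sqrt (1 - astar rho ^+ 2) by nra.
    apply: sq_le; first nra.
    rewrite [X in _ <= X]exprMn sqr_sqrtr; last exact: ltW.
    have -> : (4 + rho ^+ 2) ^+ 2 * (1 - astar rho ^+ 2) =
      (4 + rho ^+ 2) ^+ 2 - (astar rho * (rho ^+ 2 + 4)) ^+ 2 by ring.
    rewrite e; nra.
  - rewrite /T2f /V2.
    have hD : 0 < 2 * (1 + rho) ^+ 2 * (1 + astar rho) by apply: mulr_gt0; nra.
    apply: div_le => //; first by rewrite sqrtr_gt0.
    apply: sq_le; first by apply: mulr_ge0 => //; exact: sqrtr_ge0.
    rewrite [X in _ <= X]exprMn hQ sqr_sqrtr; last exact: ltW.
    have -> : (4 + rho ^+ 2) * (2 * (1 + rho) ^+ 2 * (1 + astar rho)) =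
      2 * (1 + rho) ^+ 2 * (rho ^+ 2 + 4 + astar rho * (rho ^+ 2 + 4)) by ring.
    rewrite e; nra.
move=> v [a [ha ->]].
have hh : 0 <= a 2%N < 1 by have [] := ha 2%N erefl; move=> -> ->.
rewrite kobj1 //; exact: (@lb1 rho (a 2%N) h hh).
Qed.


Lemma kk_lb rho k : 1 < rho -> (1 <= k)%N -> V1 rho <= kappa_k rho k.
Proof.
move=> hr hk; apply: lb_le_inf.
  by exists (kobj rho k a0); exists a0; split => //; exact: adm0.
move=> v [a [ha ->]]; exact: lb_sqrt.
Qed.

Lemma kappa_hlb rho : 1 < rho ->
  has_lbound [set v | exists k : nat, (1 <= k)%N /\ v = kappa_k rho k].
Proof. move=> hr; exists (V1 rho) => v [k [hk ->]]; exact: kk_lb. Qed.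

Lemma kappa_le1 rho : 1 < rho -> kappa rho <= kappa_k rho 1.
Proof.
move=> hr; have h := ge_inf (kappa_hlb rho hr).
have hE : exists k : nat, (1 <= k)%N /\ kappa_k rho 1 = kappa_k rho k by exists 1%N.
exact: h _ hE.
Qed.

Lemma kappa_ge rho : 1 < rho -> V1 rho <= kappa rho.
Proof.
move=> hr; apply: lb_le_inf; first by exists (kappa_k rho 1); exists 1%N.
move=> v [k [hk ->]]; exact: kk_lb.
Qed.

Lemma kk1_bounds rho : 1 < rho -> 0 < kappa_k rho 1 /\ kappa_k rho 1 < 1.
Proof.
move=> hr; case: (leP rho 2) => h.
  by rewrite kk1_le2 //; split; [exact: V1_pos | exact: V1_lt1].
rewrite kk1_ge2; last exact: ltW.
by split; [exact: V2_pos | apply: V2_lt1; exact: ltW].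
Qed.

Lemma kappa_eq rho : 1 < rho -> 2 * rho <= 5 -> kappa rho = kappa_k rho 1.
Proof.
move=> hr h5; apply/le_anti/andP; split; first exact: kappa_le1.
apply: lb_le_inf; first by exists (kappa_k rho 1); exists 1%N.
move=> v [k [hk ->]].
case: (leP rho 2) => h.
  by rewrite kk1_le2 //; exact: kk_lb.
have h2 : 2 <= rho by exact: ltW.
rewrite kk1_ge2 //.
case: k hk => [//|[|k]] _; first by rewrite kk1_ge2.
apply: lb_le_inf.
  by exists (kobj rho k.+2 a0); exists a0; split => //; exact: adm0.
move=> w [a [ha ->]]; exact: lb_k2.
Qed.

End S.

Theorem lemma2p1 (R : realType) :
  (forall rho : R, 1 < rho ->
     (0 < kappa_k rho 1 /\ kappa_k rho 1 < 1) /\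
     (rho <= 2 -> kappa_k rho 1 = 2 * Num.sqrt rho / (1 + rho)) /\
     (2 <= rho -> kappa_k rho 1 = Num.sqrt (4 + rho ^+ 2) / (1 + rho)) /\
     (0 < kappa rho /\ kappa rho < 1)) /\
  (exists rho0 : R, 2 < rho0 /\
     forall rho : R, 1 < rho -> rho <= rho0 ->
       kappa rho = kappa_k rho 1 /\
       (rho <= 2 -> kappa rho = 2 * Num.sqrt rho / (1 + rho)) /\
       (2 <= rho -> kappa rho = Num.sqrt (4 + rho ^+ 2) / (1 + rho))).
Proof.
split.
  move=> rho hr; have [b0 b1] := @kk1_bounds R rho hr.
  split; first by split.
  split; first by move=> h; exact: (@kk1_le2 R).
  split; first by move=> h; exact: (@kk1_ge2 R).
  split.
    exact: lt_le_trans (@V1_pos R rho hr) (@kappa_ge R rho hr).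
  exact: le_lt_trans (@kappa_le1 R rho hr) b1.
exists (5 / 2); split; first lra.
move=> rho h1 h2; have e : kappa rho = kappa_k rho 1 by apply: (@kappa_eq R) => //; lra.
rewrite e; split => //; split.
  by move=> h; exact: (@kk1_le2 R).
by move=> h; exact: (@kk1_ge2 R).
Qed.
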